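(* Let $G$ be a torsion-free hyperbolic group and $\mathcal{H}$ a peripheral structure of $G$. Let $T_1$ and $T_2$ be two metric $G$-trees such that, in each of them, the elliptic subgroups are exactly the subgroups of $G$ contained in conjugates of groups of $\mathcal{H}$. Then for any automorphism $\alpha$ of $G$ preserving $\mathcal{H}$ (sending each group in $\mathcal{H}$ to a conjugate of a group of the same conjugacy class), an element $g\in G$ has polynomial $\|\cdot\|_{T_1}$-growth under $\alpha$ if and only if it has polynomial $\|\cdot\|_{T_2}$-growth under $\alpha$.
   Context: A peripheral structure is a finite tuple of conjugacy classes of subgroups of $G$. A metric $G$-tree is a metric simplicial tree with an isometric $G$-action. For such a tree $T$ and $g\in G$, $\|g\|_T=\min_v d_T(v,gv)$, the minimum over vertices $v$ of $T$. An element $g$ has polynomial $\|\cdot\|_T$-growth under $\alpha$ if there is a polynomial $P\in\mathbb{Z}[X]$ with $\|\alpha^n(g)\|_T\le P(n)$ for all $n$. *)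

(* Defs.v *)
From Stdlib Require Import Reals List ZArith Arith Lia.
Open Scope R_scope.

Record group := Group {
  gcar :> Type;
  gmul : gcar -> gcar -> gcar;
  gone : gcar;
  ginv : gcar -> gcar;
  gmulA : forall x y z, gmul x (gmul y z) = gmul (gmul x y) z;
  gmul1l : forall x, gmul gone x = x;
  gmulVl : forall x, gmul (ginv x) x = gone
}.

Arguments gmul {g} _ _.
Arguments gone {g}.
Arguments ginv {g} _.

Fixpoint gpow {G : group} (x : G) (n : nat) : G :=
  match n with O => gone | S m => gmul x (gpow x m) end.

Definition torsion_free (G : group) : Prop :=
  forall (x : G) (n : nat), (1 <= n)%nat -> gpow x n = gone -> x = gone.

Definition is_subgroup (G : group) (H : G -> Prop) : Prop :=
  H gone /\ (forall x y, H x -> H y -> H (gmul x y)) /\ (forall x, H x -> H (ginv x)).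

Definition in_conj {G : group} (g : G) (H : G -> Prop) (x : G) : Prop :=
  H (gmul (ginv g) (gmul x g)).

Definition is_automorphism (G : group) (a : G -> G) : Prop :=
  (forall x y, a (gmul x y) = gmul (a x) (a y)) /\
  (forall x y, a x = a y -> x = y) /\
  (forall y, exists x, a x = y).

Definition gen_word {G : group} (S : list G) (w : list G) : Prop :=
  Forall (fun s => In s S \/ In (ginv s) S) w.

Definition wprod {G : group} (w : list G) : G := fold_right gmul gone w.

Definition generates {G : group} (S : list G) : Prop :=
  forall x : G, exists w, gen_word S w /\ wprod w = x.

Definition wlen_is {G : group} (S : list G) (x : G) (n : nat) : Prop :=
  (exists w, gen_word S w /\ wprod w = x /\ length w = n) /\
  (forall w, gen_word S w -> wprod w = x -> (n <= length w)%nat).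

(* Gromov's four-point condition for the word metric d(x,y) = |x^-1 y|_S *)
Definition hyperbolic (G : group) : Prop :=
  exists S : list G, generates S /\
  exists delta : nat,
    forall (x y z t : G) (dxy dzt dxz dyt dxt dyz : nat),
      wlen_is S (gmul (ginv x) y) dxy ->
      wlen_is S (gmul (ginv z) t) dzt ->
      wlen_is S (gmul (ginv x) z) dxz ->
      wlen_is S (gmul (ginv y) t) dyt ->
      wlen_is S (gmul (ginv x) t) dxt ->
      wlen_is S (gmul (ginv y) z) dyz ->
      (dxy + dzt <= Nat.max (dxz + dyt) (dxt + dyz) + 2 * delta)%nat.

Section Walks.
Variables (V : Type) (E : V -> V -> Prop) (len : V -> V -> R).

Inductive walk : V -> list V -> V -> Prop :=
| walk_nil v : walk v nil v
| walk_cons u w l v : E u w -> walk w l v -> walk u (w :: l) v.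

Fixpoint wlength (u : V) (l : list V) : R :=
  match l with nil => 0 | w :: l' => len u w + wlength w l' end.

(* no backtracking: x_i <> x_{i+2} *)
Fixpoint reduced (u : V) (l : list V) : Prop :=
  match l with
  | w :: ((x :: _) as l') => u <> x /\ reduced w l'
  | _ => True
  end.
End Walks.

Record gtree (G : group) := GTree {
  tV : Type;
  tE : tV -> tV -> Prop;
  tlen : tV -> tV -> R;
  tE_sym : forall u v, tE u v -> tE v u;
  tE_irrefl : forall v, ~ tE v v;
  tlen_sym : forall u v, tlen u v = tlen v u;
  tlen_pos : forall u v, tE u v -> 0 < tlen u v;
  (* tree: connected, and reduced walks between two vertices are unique *)
  t_conn : forall u v, exists l, walk tV tE u l v;
  t_uniq : forall u v l1 l2, walk tV tE u l1 v -> reduced tV u l1 ->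
             walk tV tE u l2 v -> reduced tV u l2 -> l1 = l2;
  tact : G -> tV -> tV;
  tact1 : forall v, tact gone v = v;
  tactM : forall g h v, tact (gmul g h) v = tact g (tact h v);
  tact_E : forall g u v, tE u v <-> tE (tact g u) (tact g v);
  tact_len : forall g u v, tE u v -> tlen (tact g u) (tact g v) = tlen u v
}.

Arguments tV {G} _.
Arguments tE {G} _ _ _.
Arguments tlen {G} _ _ _.
Arguments tact {G} _ _ _.

(* K is elliptic: it fixes a point of the (geometric) tree, i.e. it fixes a
   vertex or leaves an edge invariant (fixing its midpoint). *)
Definition elliptic {G : group} (T : gtree G) (K : G -> Prop) : Prop :=
  (exists v, forall k, K k -> tact T k v = v) \/
  (exists u w, tE T u w /\ forall k, K k ->
     (tact T k u = u /\ tact T k w = w) \/ (tact T k u = w /\ tact T k w = u)).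

Definition elliptic_iff_peripheral {G : group} (T : gtree G) (Hs : list (G -> Prop)) : Prop :=
  forall K : G -> Prop, is_subgroup G K ->
    (elliptic T K <-> exists H g, In H Hs /\ forall x, K x -> in_conj g H x).

Definition preserves_periph {G : group} (a : G -> G) (Hs : list (G -> Prop)) : Prop :=
  forall H, In H Hs -> exists g : G,
    forall x, (exists h, H h /\ a h = x) <-> in_conj g H x.

(* ||g||_T <= r  iff  d_T(v, g v) <= r for some vertex v, where d_T(u,w) is
   the length of a (shortest) walk from u to w. *)
Definition tl_le {G : group} (T : gtree G) (g : G) (r : R) : Prop :=
  exists v l, walk (tV T) (tE T) v l (tact T g v) /\ wlength (tV T) (tlen T) v l <= r.

Fixpoint peval (p : list Z) (x : R) : R :=
  match p with nil => 0 | a :: p' => IZR a + x * peval p' x end.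

Fixpoint iter_fun {A : Type} (f : A -> A) (n : nat) (x : A) : A :=
  match n with O => x | S m => f (iter_fun f m x) end.

Definition poly_growth {G : group} (T : gtree G) (a : G -> G) (g : G) : Prop :=
  exists P : list Z, forall n : nat, tl_le T (iter_fun a n g) (peval P (INR n)).

(* Main.v *)
Require Import Defs.
From Stdlib Require Import Reals List ZArith Lia Lra Classical.
Import ListNotations.
Open Scope R_scope.


Fixpoint lst {V} (u:V) (l:list V) : V := match l with [] => u | w::l' => lst w l' end.
Fixpoint prs {V} (u:V) (l:list V) : list (V*V) :=
  match l with [] => [] | w::l' => (u,w)::prs w l' end.
Fixpoint penult {V} (u:V) (l:list V) : V :=
  match l with [] => u | w::l' => match l' with [] => u | _ => penult w l' end end.
Definition rp {V} (u:V) (l:list V) : list V := tl (rev (u::l)).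
Definition NB {V} (P : list V) : Prop :=
  forall l1 l2 a b, P <> l1 ++ a :: b :: a :: l2.

Lemma last_lst {V} (u:V) l : last l u = lst u l.
Proof. revert u; induction l as [|w l IH]; intro u; simpl; auto.
  rewrite <- (IH w). destruct l as [|x l]; auto. clear IH. revert x.
  induction l; intros; simpl; auto. exact (IHl a). Qed.

Lemma walk_iff {V} (E : V -> V -> Prop) u l v :
  walk V E u l v <-> (forall x y, In (x,y) (prs u l) -> E x y) /\ lst u l = v.
Proof. split.
- induction 1; simpl.
  + split; auto. intros x y [].
  + destruct IHwalk as [I1 I2]. split; auto.
    intros x y [H1|H1]; [inversion H1; subst; auto | apply I1; auto].
- revert u; induction l as [|w l IH]; intros u [H1 H2]; simpl in *.
  + subst; constructor.
  + constructor; auto. Qed.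

Lemma lst_app {V} (u:V) l1 l2 : lst u (l1 ++ l2) = lst (lst u l1) l2.
Proof. revert u; induction l1; simpl; auto. Qed.
Lemma prs_app {V} (u:V) l1 l2 : prs u (l1 ++ l2) = prs u l1 ++ prs (lst u l1) l2.
Proof. revert u; induction l1; simpl; intros; auto. rewrite IHl1; auto. Qed.
Lemma wlength_app {V} len (u:V) l1 l2 :
  wlength V len u (l1 ++ l2) = wlength V len u l1 + wlength V len (lst u l1) l2.
Proof. revert u; induction l1; simpl; intros. lra. rewrite IHl1; lra. Qed.

Lemma penult_app {V} (u:V) l1 l2 : l2 <> [] -> penult u (l1 ++ l2) = penult (lst u l1) l2.
Proof. revert u; induction l1 as [|w l1 IH]; intros u H; simpl; auto.
  rewrite <- IH; auto. destruct (l1 ++ l2) eqn:E.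
  - apply app_eq_nil in E; tauto.
  - auto. Qed.

Lemma penult_snoc {V} (u:V) l z : penult u (l ++ [z]) = lst u l.
Proof. rewrite penult_app; [simpl; auto | discriminate]. Qed.

Lemma rev_path {V} (u:V) l : rev (u::l) = lst u l :: rp u l.
Proof. unfold rp. revert u. induction l using rev_ind; intros u; simpl; auto.
  rewrite lst_app; simpl. replace (rev (l ++ [x]) ++ [u]) with (rev ((u :: l) ++ [x])).
  rewrite rev_unit. simpl; auto. simpl. rewrite rev_app_distr; simpl; auto. Qed.

Lemma rp_snoc {V} (u:V) l z : rp u (l ++ [z]) = lst u l :: rp u l.
Proof. unfold rp at 1. replace (u :: l ++ [z]) with ((u :: l) ++ [z]) by auto.
  rewrite rev_unit; simpl. apply rev_path. Qed.

Lemma lst_rp {V} (u:V) l : lst (lst u l) (rp u l) = u.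
Proof. induction l using rev_ind; simpl; auto.
  rewrite rp_snoc, lst_app; simpl. auto. Qed.

Lemma prs_rp {V} (u:V) l x y : In (x,y) (prs (lst u l) (rp u l)) <-> In (y,x) (prs u l).
Proof. induction l using rev_ind; simpl; [tauto|].
  rewrite rp_snoc, lst_app, prs_app; simpl. rewrite in_app_iff, IHl; simpl.
  split; intros [H|H]; try tauto; try (inversion H; subst; tauto).
  destruct H as [H|H]; [inversion H; subst; tauto| tauto]. Qed.

Lemma wlength_rp {V} (len : V -> V -> R) (hs : forall a b, len a b = len b a) u l :
  wlength V len (lst u l) (rp u l) = wlength V len u l.
Proof. induction l using rev_ind; simpl; auto.
  rewrite rp_snoc, lst_app, wlength_app; simpl. rewrite IHl, hs; lra. Qed.

Lemma rp_head {V} (u:V) l : l <> [] -> exists r, rp u l = penult u l :: r.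
Proof. intro H. destruct (exists_last H) as [l0 [z ->]].
  rewrite rp_snoc, penult_snoc; eauto. Qed.

Lemma penult_in {V} (u:V) l : l <> [] -> In (penult u l, lst u l) (prs u l).
Proof. intro H. destruct (exists_last H) as [l0 [z ->]].
  rewrite penult_snoc, prs_app, lst_app; simpl. apply in_app_iff; simpl; auto. Qed.

Lemma red_NB {V} (u:V) l : reduced V u l <-> NB (u::l).
Proof. unfold NB. split.
- revert u; induction l as [|w l IH]; intros u H l1 l2 a b E.
  + destruct l1 as [|? [|]]; discriminate.
  + destruct l as [|x l'].
    * destruct l1 as [|? [|? [|]]]; discriminate.
    * destruct H as [H1 H2]. destruct l1 as [|y l1]; simpl in E.
      -- inversion E; subst; congruence.
      -- inversion E; subst. apply (IH w H2 l1 l2 a b); auto.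
- revert u; induction l as [|w l IH]; intros u H; simpl; auto.
  destruct l as [|x l']; auto. split.
  + intro; subst. apply (H [] l' x w); auto.
  + apply IH. intros l1 l2 a b E. apply (H (u::l1) l2 a b). rewrite E; auto. Qed.

Lemma red_rp {V} (u:V) l : reduced V u l -> reduced V (lst u l) (rp u l).
Proof. rewrite !red_NB, <- rev_path. unfold NB. intros H l1 l2 a b E.
  apply (H (rev l2) (rev l1) a b). rewrite <- (rev_involutive (u::l)), E.
  rewrite rev_app_distr; simpl. repeat rewrite <- app_assoc; simpl; auto. Qed.

Lemma red_app {V} (u:V) l1 l2 : reduced V u l1 -> reduced V (lst u l1) l2 ->
  (l1 <> [] -> forall x l2', l2 = x :: l2' -> penult u l1 <> x) ->
  reduced V u (l1 ++ l2).
Proof. revert u; induction l1 as [|a l1 IH]; intros u H1 H2 H3; simpl in *; auto.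
  destruct l1 as [|b l1''].
  - simpl in *. destruct l2 as [|x l2']; auto. split; auto.
    apply (H3 ltac:(discriminate) x l2'); auto.
  - destruct H1 as [H1a H1b]. simpl. split; auto.
    apply IH; auto. intros _ x l2' E. apply (H3 ltac:(discriminate) x l2' E). Qed.

Lemma red_tail {V} (a b : V) l : reduced V a (b::l) -> reduced V b l.
Proof. destruct l; simpl; tauto. Qed.

Lemma reduce {V} (len : V -> V -> R) u l :
  (forall x y, In (x,y) (prs u l) -> 0 <= len x y) ->
  exists l', reduced V u l' /\ lst u l' = lst u l /\
    (forall x y, In (x,y) (prs u l') -> In (x,y) (prs u l)) /\
    wlength V len u l' <= wlength V len u l.
Proof. revert u; induction l as [|w l IH]; intros u Hn.
- exists []; simpl; repeat split; auto; lra.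
- destruct (IH w) as [l0 [R1 [R2 [R3 R4]]]].
  { intros x y H; apply Hn; simpl; auto. }
  assert (Huw : 0 <= len u w) by (apply Hn; simpl; auto).
  destruct l0 as [|c rest].
  + exists [w]; simpl in *; repeat split; auto; try lra.
    intros x y [H|[]]; auto.
  + destruct (classic (u = c)) as [E|E].
    * subst c. exists rest.
      assert (Hwu : 0 <= len w u) by (apply Hn; simpl; right; apply R3; simpl; auto).
      repeat split.
      -- apply (red_tail _ _ _ R1).
      -- simpl in *; auto.
      -- intros x y H. simpl. right. apply R3. simpl. auto.
      -- simpl in *; lra.
    * exists (w :: c :: rest). simpl in *. repeat split; auto.
      -- intros x y [H|H]; auto.
      -- lra. Qed.

Lemma gmulV {G : group} (x : G) : gmul x (ginv x) = gone.
Proof. set (y := ginv x).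
  rewrite <- (gmul1l G (gmul x y)). rewrite <- (gmulVl G y) at 1.
  rewrite <- gmulA. rewrite (gmulA G y x y). unfold y at 2 3. rewrite gmulVl, gmul1l.
  apply gmulVl. Qed.

Lemma gmul1r {G : group} (x : G) : gmul x gone = x.
Proof. rewrite <- (gmulVl G x), gmulA, gmulV, gmul1l; auto. Qed.

Lemma ginv1 {G : group} : ginv (gone : G) = gone.
Proof. rewrite <- (gmul1r (ginv gone)). apply gmulVl. Qed.

Lemma tactV {G} (T : gtree G) g v : tact T (ginv g) (tact T g v) = v.
Proof. rewrite <- tactM, gmulVl, tact1; auto. Qed.
Lemma tactV' {G} (T : gtree G) g v : tact T g (tact T (ginv g) v) = v.
Proof. rewrite <- tactM, gmulV, tact1; auto. Qed.
Lemma tact_inj {G} (T : gtree G) g u v : tact T g u = tact T g v -> u = v.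
Proof. intro H. rewrite <- (tactV T g u), H, tactV; auto. Qed.

Definition Dle {G} (T : gtree G) x y r :=
  exists l, walk (tV T) (tE T) x l y /\ wlength (tV T) (tlen T) x l <= r.

Lemma wl_nonneg {G} (T : gtree G) u l :
  (forall x y, In (x,y) (prs u l) -> tE T x y) -> 0 <= wlength (tV T) (tlen T) u l.
Proof. revert u; induction l as [|w l IH]; intros u H; simpl; [lra|].
  assert (0 < tlen T u w) by (apply tlen_pos, H; simpl; auto).
  assert (0 <= wlength (tV T) (tlen T) w l) by (apply IH; intros; apply H; simpl; auto).
  lra. Qed.

Lemma walk_nonneg {G} (T : gtree G) u l v :
  walk (tV T) (tE T) u l v -> 0 <= wlength (tV T) (tlen T) u l.
Proof. intro H. apply walk_iff in H. apply wl_nonneg; tauto. Qed.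

Lemma lst_map {A B} (f : A -> B) u l : lst (f u) (map f l) = f (lst u l).
Proof. revert u; induction l; simpl; auto. Qed.
Lemma prs_map {A B} (f : A -> B) u l x y : In (x,y) (prs (f u) (map f l)) <->
  exists a b, In (a,b) (prs u l) /\ x = f a /\ y = f b.
Proof. revert u; induction l as [|w l IH]; intros u; simpl.
  - split; [tauto| intros [a [b [[] _]]]].
  - rewrite IH. split.
    + intros [H|[a [b [H1 [H2 H3]]]]].
      * inversion H; subst; exists u, w; auto.
      * exists a, b; auto.
    + intros [a [b [[H1|H1] [H2 H3]]]].
      * inversion H1; subst; auto.
      * right; exists a, b; auto. Qed.

Lemma wl_map {G} (T : gtree G) g u l :
  (forall x y, In (x,y) (prs u l) -> tE T x y) ->
  wlength (tV T) (tlen T) (tact T g u) (map (tact T g) l) = wlength (tV T) (tlen T) u l.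
Proof. revert u; induction l as [|w l IH]; intros u H; simpl; auto.
  rewrite tact_len by (apply H; simpl; auto). rewrite IH; auto.
  intros; apply H; simpl; auto. Qed.

Lemma red_map {A B} (f : A -> B) (hf : forall a b, f a = f b -> a = b) u l :
  reduced A u l -> reduced B (f u) (map f l).
Proof. revert u; induction l as [|w l IH]; intros u H; simpl; auto.
  destruct l as [|x l]; simpl; auto. destruct H as [H1 H2]. split.
  - intro E; apply H1, hf, E.
  - apply (IH w H2). Qed.

Lemma walk_map {G} (T : gtree G) g u l v :
  walk (tV T) (tE T) u l v -> walk (tV T) (tE T) (tact T g u) (map (tact T g) l) (tact T g v).
Proof. rewrite !walk_iff. intros [H1 H2]. split.
  - intros x y Hxy. apply prs_map in Hxy. destruct Hxy as [a [b [Hab [-> ->]]]].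
    apply tact_E; auto.
  - rewrite lst_map, H2; auto. Qed.

Lemma walk_rp {G} (T : gtree G) u l v :
  walk (tV T) (tE T) u l v -> walk (tV T) (tE T) v (rp u l) u.
Proof. rewrite !walk_iff. intros [H1 H2]. subst v. split.
  - intros x y H. apply (proj1 (prs_rp u l x y)) in H. apply (tE_sym G T). apply H1; auto.
  - apply lst_rp. Qed.

Lemma walk_app {V} E (u : V) l1 m l2 v : walk V E u l1 m -> walk V E m l2 v ->
  walk V E u (l1 ++ l2) v.
Proof. rewrite !walk_iff. intros [H1 H2] [H3 H4]. subst. split.
  - intros x y H. rewrite prs_app in H. apply in_app_iff in H. destruct H; auto.
  - rewrite lst_app; auto. Qed.

Lemma Dle_refl {G} (T : gtree G) x : Dle T x x 0.
Proof. exists []; split; [constructor| simpl; lra]. Qed.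
Lemma Dle_mono {G} (T : gtree G) x y a b : Dle T x y a -> a <= b -> Dle T x y b.
Proof. intros [l [H1 H2]] H; exists l; split; auto; lra. Qed.
Lemma Dle_trans {G} (T : gtree G) x y z a b : Dle T x y a -> Dle T y z b -> Dle T x z (a+b).
Proof. intros [l1 [H1 H2]] [l2 [H3 H4]]. exists (l1 ++ l2). split.
  - eapply walk_app; eauto.
  - rewrite wlength_app. apply walk_iff in H1. destruct H1 as [_ ->]. lra. Qed.
Lemma Dle_sym {G} (T : gtree G) x y a : Dle T x y a -> Dle T y x a.
Proof. intros [l [H1 H2]]. exists (rp x l). split.
  - apply walk_rp; auto.
  - pose proof H1 as H1'. apply walk_iff in H1'. destruct H1' as [_ <-].
    rewrite wlength_rp; auto. apply tlen_sym. Qed.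
Lemma Dle_act {G} (T : gtree G) g x y a : Dle T x y a -> Dle T (tact T g x) (tact T g y) a.
Proof. intros [l [H1 H2]]. exists (map (tact T g) l). split.
  - apply walk_map; auto.
  - rewrite wl_map; auto. apply walk_iff in H1; tauto. Qed.
Lemma Dle_edge {G} (T : gtree G) x y : tE T x y -> Dle T x y (tlen T x y).
Proof. intro H. exists [y]. split; [apply walk_cons; [auto | apply walk_nil] | simpl; lra]. Qed.
Lemma Dle_conn {G} (T : gtree G) x y : exists a, Dle T x y a.
Proof. destruct (t_conn G T x y) as [l H]. exists (wlength (tV T) (tlen T) x l); exists l; split; auto; lra. Qed.
Lemma Dle_nonneg {G} (T : gtree G) x y a : Dle T x y a -> 0 <= a.
Proof. intros [l [H1 H2]]. pose proof (walk_nonneg T _ _ _ H1); lra. Qed.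

Lemma fin_max {A} (P : A -> R -> Prop) (mono : forall x a b, P x a -> a <= b -> P x b) L :
  (forall x, In x L -> exists K, P x K) -> exists K, 0 <= K /\ forall x, In x L -> P x K.
Proof. induction L as [|x L IH]; intros H.
- exists 0; split; [lra| intros _ []].
- destruct (H x) as [K1 HK1]; simpl; auto.
  destruct IH as [K2 [HK2 HK2']]. intros; apply H; simpl; auto.
  exists (Rmax K1 K2); split.
  + apply Rle_trans with K2; [auto| apply Rmax_r].
  + intros y [<-|Hy].
    * apply mono with K1; auto. apply Rmax_l.
    * apply mono with K2; auto. apply Rmax_r. Qed.

Lemma fin_min {A} (f : A -> R) L : (forall x, In x L -> 0 < f x) ->
  exists e, 0 < e /\ forall x, In x L -> e <= f x.
Proof. induction L as [|x L IH]; intros H.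
- exists 1; split; [lra| intros _ []].
- destruct IH as [e [He He']]. intros; apply H; simpl; auto.
  assert (0 < f x) by (apply H; simpl; auto).
  exists (Rmin e (f x)); split.
  + apply Rmin_glb_lt; auto.
  + intros y [<-|Hy]. apply Rmin_r. apply Rle_trans with e; [apply Rmin_l| auto]. Qed.

Definition stab {G} (T : gtree G) (z : tV T) : G -> Prop := fun k => tact T k z = z.

Lemma stab_sub {G} (T : gtree G) z : is_subgroup G (stab T z).
Proof. unfold stab; split; [|split].
- apply tact1.
- intros x y Hx Hy. rewrite tactM, Hy, Hx; auto.
- intros x Hx. rewrite <- Hx at 1. apply tactV. Qed.

Lemma stab_bound {G} (T1 T2 : gtree G)
  (ell : forall K, is_subgroup G K -> elliptic T1 K -> elliptic T2 K)
  (c : tV T2) (z1 z2 : tV T1) :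
  exists K, forall u, tact T1 u z1 = z2 -> Dle T2 c (tact T2 u c) K.
Proof.
  destruct (classic (exists u0, tact T1 u0 z1 = z2)) as [[u0 Hu0]|Hn].
  2:{ exists 0. intros u Hu. exfalso; apply Hn; eauto. }
  assert (Hs : exists Ks, forall k, stab T1 z1 k -> Dle T2 c (tact T2 k c) Ks).
  { assert (He : elliptic T2 (stab T1 z1)).
    { apply ell. apply stab_sub. left. exists z1. auto. }
    destruct He as [[w Hw]|[w [w' [Hww' Hk]]]].
    - destruct (Dle_conn T2 c w) as [a Ha]. exists (a + a). intros k Hk.
      apply Dle_trans with w; auto. rewrite <- (Hw k Hk) at 1.
      apply Dle_sym, Dle_act; auto.
    - destruct (Dle_conn T2 c w) as [a Ha]. exists (a + tlen T2 w w' + a).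
      intros k Hkk. destruct (Hk k Hkk) as [[E1 E2]|[E1 E2]].
      + apply Dle_mono with (a + a).
        * apply Dle_trans with w; auto. rewrite <- E1 at 1. apply Dle_sym, Dle_act; auto.
        * pose proof (tlen_pos G T2 w w' Hww'); lra.
      + apply Dle_trans with w'. apply Dle_trans with w; auto. apply Dle_edge; auto.
        rewrite <- E1. apply Dle_sym, Dle_act; auto. }
  destruct Hs as [Ks HKs]. destruct (Dle_conn T2 c (tact T2 u0 c)) as [L0 HL0].
  exists (L0 + Ks). intros u Hu.
  apply Dle_trans with (tact T2 u0 c); auto.
  replace (tact T2 u c) with (tact T2 u0 (tact T2 (gmul (ginv u0) u) c)).
  - apply Dle_act. apply HKs. unfold stab. rewrite tactM, Hu, <- Hu0. apply tactV.
  - rewrite <- tactM, gmulA, gmulV, gmul1l; auto. Qed.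

Definition Bstep {G} (T : gtree G) (B : list (tV T * tV T)) x y :=
  exists t a a', In (a,a') B /\
    ((x = tact T t a /\ y = tact T t a') \/ (x = tact T t a' /\ y = tact T t a)).
Definition Bwalk {G} (T : gtree G) B x l y :=
  (forall p q, In (p,q) (prs x l) -> Bstep T B p q) /\ lst x l = y.
Definition Yset {G} (T : gtree G) B b y := exists t l, Bwalk T B y l (tact T t b).
Definition Zl {G} (T : gtree G) (b : tV T) (B : list (tV T * tV T)) := b :: map fst B ++ map snd B.


Lemma Bstep_sym {G} (T : gtree G) B x y : Bstep T B x y -> Bstep T B y x.
Proof. intros [t [a [a' [H1 H2]]]]. exists t, a, a'. split; auto. tauto. Qed.

Lemma Bstep_act {G} (T : gtree G) B g x y : Bstep T B x y ->
  Bstep T B (tact T g x) (tact T g y).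
Proof. intros [t [a [a' [H1 H2]]]]. exists (gmul g t), a, a'. split; auto.
  rewrite !tactM. destruct H2 as [[-> ->]|[-> ->]]; auto. Qed.

Lemma Bstep_E {G} (T : gtree G) B (hB : forall a a', In (a,a') B -> tE T a a') x y :
  Bstep T B x y -> tE T x y.
Proof. intros [t [a [a' [H1 [[-> ->]|[-> ->]]]]]]; apply tact_E; auto.
  apply (tE_sym G T); auto. Qed.

Lemma Bstep_len {G} (T : gtree G) B (hB : forall a a', In (a,a') B -> tE T a a') e
  (he : forall a a', In (a,a') B -> e <= tlen T a a') x y :
  Bstep T B x y -> e <= tlen T x y.
Proof. intros [t [a [a' [H1 [[-> ->]|[-> ->]]]]]].
  - rewrite tact_len; auto.
  - rewrite tact_len. rewrite tlen_sym; auto. apply (tE_sym G T); auto. Qed.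

Lemma Bstep_Zl {G} (T : gtree G) b B x y : Bstep T B x y ->
  exists t z z', In z (Zl T b B) /\ In z' (Zl T b B) /\ x = tact T t z /\ y = tact T t z'.
Proof. intros [t [a [a' [H1 H2]]]].
  assert (Ha : In a (Zl T b B)).
  { unfold Zl; right; apply in_app_iff; left. change a with (fst (a,a')). apply in_map; auto. }
  assert (Ha' : In a' (Zl T b B)).
  { unfold Zl; right; apply in_app_iff; right. change a' with (snd (a,a')). apply in_map; auto. }
  destruct H2 as [[-> ->]|[-> ->]]; exists t; eauto 6. Qed.

Lemma Bwalk_walk {G} (T : gtree G) B (hB : forall a a', In (a,a') B -> tE T a a') x l y :
  Bwalk T B x l y -> walk (tV T) (tE T) x l y.
Proof. intros [H1 H2]. apply walk_iff; split; auto. intros; eapply Bstep_E; eauto. Qed.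

Lemma Bwalk_app {G} (T : gtree G) B x l1 y l2 z :
  Bwalk T B x l1 y -> Bwalk T B y l2 z -> Bwalk T B x (l1 ++ l2) z.
Proof. intros [H1 H2] [H3 H4]. split.
  - intros p q H. rewrite prs_app in H. apply in_app_iff in H. subst y. destruct H; auto.
  - rewrite lst_app. subst; auto. Qed.

Lemma Bwalk_rp {G} (T : gtree G) B x l y : Bwalk T B x l y -> Bwalk T B y (rp x l) x.
Proof. intros [H1 H2]. subst y. split.
  - intros p q H. apply (proj1 (prs_rp x l p q)) in H. apply Bstep_sym; auto.
  - apply lst_rp. Qed.

Lemma Bwalk_map {G} (T : gtree G) B g x l y : Bwalk T B x l y ->
  Bwalk T B (tact T g x) (map (tact T g) l) (tact T g y).
Proof. intros [H1 H2]. split.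
  - intros p q H. apply prs_map in H. destruct H as [a [a' [H [-> ->]]]].
    apply Bstep_act; auto.
  - rewrite lst_map; subst; auto. Qed.

Lemma Y_act {G} (T : gtree G) B b g y : Yset T B b y -> Yset T B b (tact T g y).
Proof. intros [t [l H]]. exists (gmul g t), (map (tact T g) l).
  rewrite tactM. apply Bwalk_map; auto. Qed.

Lemma Y_act_inv {G} (T : gtree G) B b g y : Yset T B b (tact T g y) -> Yset T B b y.
Proof. intro H. rewrite <- (tactV T g y). apply Y_act; auto. Qed.

Lemma Y_step {G} (T : gtree G) B b y w : Yset T B b y -> Bstep T B y w -> Yset T B b w.
Proof. intros [t [l [H1 H2]]] Hs. exists t, (y :: l). split; auto.
  intros p q [E|E]; [inversion E; subst; apply Bstep_sym; auto| auto]. Qed.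

Lemma Y_walk {G} (T : gtree G) B b y l : Yset T B b y ->
  (forall p q, In (p,q) (prs y l) -> Bstep T B p q) ->
  forall p q, In (p,q) (prs y l) -> Yset T B b p /\ Yset T B b q.
Proof. revert y; induction l as [|w l IH]; intros y Hy H p q Hpq; simpl in Hpq; [tauto|].
  assert (Hw : Yset T B b w) by (apply Y_step with y; auto; apply H; simpl; auto).
  destruct Hpq as [E|E].
  - inversion E; subst; auto.
  - apply IH with w; auto. intros; apply H; simpl; auto. Qed.

Lemma Y_Zl {G} (T : gtree G) B b y : Yset T B b y ->
  exists t z, In z (Zl T b B) /\ y = tact T t z.
Proof. intros [t [l [H1 H2]]]. destruct l as [|w l].
  - simpl in H2. exists t, b. split; auto. left; auto.
  - destruct (Bstep_Zl T b B y w) as [t' [z [z' [Hz [_ [-> _]]]]]].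
    apply H1; simpl; auto. eauto. Qed.

Lemma prefix {V} (Y : V -> Prop) l v : Y (lst v l) ->
  exists l1, Y (lst v l1) /\ (forall x y, In (x,y) (prs v l1) -> In (x,y) (prs v l)) /\
    (forall x y, In (x,y) (prs v l1) -> ~ Y x).
Proof. revert v; induction l as [|w l IH]; intros v H.
- exists []; simpl; repeat split; auto; intros x y [].
- destruct (classic (Y v)) as [Hv|Hv].
  + exists []; simpl; repeat split; auto; intros x y [].
  + destruct (IH w H) as [l1 [H1 [H2 H3]]]. exists (w :: l1). simpl. repeat split; auto.
    * intros x y [E|E]; auto.
    * intros x y [E|E]; [inversion E; subst; auto| eauto]. Qed.

Lemma Bwalk_count {G} (T : gtree G) B (hB : forall a a', In (a,a') B -> tE T a a') e
  (he : forall a a', In (a,a') B -> e <= tlen T a a') x l :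
  (forall p q, In (p,q) (prs x l) -> Bstep T B p q) ->
  INR (length l) * e <= wlength (tV T) (tlen T) x l.
Proof. revert x; induction l as [|w l IH]; intros x H.
- simpl; lra.
- change (INR (S (length l)) * e <= tlen T x w + wlength (tV T) (tlen T) w l). rewrite S_INR. assert (e <= tlen T x w) by (eapply Bstep_len; eauto; apply H; simpl; auto).
  assert (INR (length l) * e <= wlength (tV T) (tlen T) w l) by (apply IH; intros; apply H; simpl; auto).
  lra. Qed.

Lemma mkB {G} (T : gtree G) (S : list G) b : exists B : list (tV T * tV T),
  (forall a a', In (a,a') B -> tE T a a') /\
  forall s, In s S -> exists l, walk (tV T) (tE T) b l (tact T s b) /\
     forall x y, In (x,y) (prs b l) -> In (x,y) B.
Proof. induction S as [|s S IH].
- exists []; split; [intros a a' []| intros s []].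
- destruct IH as [B [H1 H2]]. destruct (t_conn G T b (tact T s b)) as [l Hl].
  exists (prs b l ++ B). split.
  + intros a a' H. apply in_app_iff in H. destruct H; auto.
    apply walk_iff in Hl. apply Hl; auto.
  + intros s' [<-|Hs'].
    * exists l; split; auto. intros; apply in_app_iff; auto.
    * destruct (H2 s' Hs') as [l' [Hl1 Hl2]]. exists l'; split; auto.
      intros; apply in_app_iff; auto. Qed.

Lemma Bwalk_of_walk {G} (T : gtree G) B b l y :
  walk (tV T) (tE T) b l y -> (forall x y, In (x,y) (prs b l) -> In (x,y) B) ->
  Bwalk T B b l y.
Proof. intros H1 H2. apply walk_iff in H1. split; [|tauto].
  intros p q H. exists gone, p, q. split; auto. left. rewrite !tact1; auto. Qed.

Lemma Bwalk_word {G} (T : gtree G) (S : list G) b B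
  (HS : forall s, In s S -> exists l, walk (tV T) (tE T) b l (tact T s b) /\
     forall x y, In (x,y) (prs b l) -> In (x,y) B) :
  forall w, gen_word S w -> forall t, exists l,
    Bwalk T B (tact T t b) l (tact T (gmul t (wprod w)) b).
Proof. induction w as [|s w IH]; intros Hw t; simpl.
- exists []. split; [intros p q []| simpl; rewrite gmul1r; auto].
- inversion Hw as [|? ? Hs Hw']; subst.
  assert (H1 : exists l1, Bwalk T B (tact T t b) l1 (tact T (gmul t s) b)).
  { destruct Hs as [Hs|Hs].
    - destruct (HS s Hs) as [l [Hl1 Hl2]]. exists (map (tact T t) l).
      rewrite tactM. apply Bwalk_map. apply Bwalk_of_walk; auto.
    - destruct (HS (ginv s) Hs) as [l [Hl1 Hl2]].
      assert (Hb : Bwalk T B (tact T (gmul t s) b) (map (tact T (gmul t s)) l)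
                     (tact T (gmul t s) (tact T (ginv s) b))).
      { apply Bwalk_map. apply Bwalk_of_walk; auto. }
      rewrite <- tactM, <- gmulA, gmulV, gmul1r in Hb.
      eexists. apply (Bwalk_rp _ _ _ _ _ Hb). }
  destruct H1 as [l1 H1]. destruct (IH Hw' (gmul t s)) as [l2 H2].
  exists (l1 ++ l2). rewrite gmulA. eapply Bwalk_app; eauto. Qed.

Lemma xfer {G} (T1 T2 : gtree G) Z c K
  (HK : forall z1 z2, In z1 Z -> In z2 Z -> forall u, tact T1 u z1 = z2 ->
        Dle T2 c (tact T2 u c) K) t0 a0 t a :
  In a0 Z -> In a Z -> tact T1 t0 a0 = tact T1 t a ->
  Dle T2 (tact T2 t0 c) (tact T2 t c) K.
Proof. intros H0 H1 E.
  replace (tact T2 t c) with (tact T2 t0 (tact T2 (gmul (ginv t0) t) c)).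
  - apply Dle_act. apply (HK a a0); auto. rewrite tactM, <- E. apply tactV.
  - rewrite <- tactM, gmulA, gmulV, gmul1l; auto. Qed.

Lemma chain {G} (T1 T2 : gtree G) b B c K
  (HK : forall z1 z2, In z1 (Zl T1 b B) -> In z2 (Zl T1 b B) -> forall u, tact T1 u z1 = z2 ->
        Dle T2 c (tact T2 u c) K) :
  forall l y t0 a0, In a0 (Zl T1 b B) -> y = tact T1 t0 a0 ->
  (forall p q, In (p,q) (prs y l) -> Bstep T1 B p q) ->
  exists t1 a1, In a1 (Zl T1 b B) /\ lst y l = tact T1 t1 a1 /\
    Dle T2 (tact T2 t0 c) (tact T2 t1 c) (K * INR (length l)).
Proof. induction l as [|w l IH]; intros y t0 a0 Ha0 Ey H.
- exists t0, a0. simpl. repeat split; auto. rewrite Rmult_0_r. apply Dle_refl.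
- destruct (Bstep_Zl T1 b B y w) as [t [z [z' [Hz [Hz' [Ey' Ew]]]]]].
  { apply H; simpl; auto. }
  destruct (IH w t z' Hz' Ew) as [t1 [a1 [H1 [H2 H3]]]].
  { intros; apply H; simpl; auto. }
  exists t1, a1. repeat split; auto.
  change (length (w :: l)) with (S (length l)). rewrite S_INR.
  replace (K * (INR (length l) + 1)) with (K + K * INR (length l)) by ring.
  apply Dle_trans with (tact T2 t c); auto.
  apply (xfer T1 T2 (Zl T1 b B) c K HK t0 a0 t z); auto. congruence. Qed.

Lemma main_core {G} (T1 T2 : gtree G) S (gen : generates S) b B
 (hB : forall a a', In (a,a') B -> tE T1 a a')
 (HS : forall s, In s S -> exists l, walk (tV T1) (tE T1) b l (tact T1 s b) /\
     forall x y, In (x,y) (prs b l) -> In (x,y) B)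
 e (he0 : 0 < e) (he : forall a a', In (a,a') B -> e <= tlen T1 a a')
 c K (HK0 : 0 <= K)
 (HK : forall z1 z2, In z1 (Zl T1 b B) -> In z2 (Zl T1 b B) -> forall u, tact T1 u z1 = z2 ->
        Dle T2 c (tact T2 u c) K)
 h v l r (Hw : walk (tV T1) (tE T1) v l (tact T1 h v))
 (Hr : wlength (tV T1) (tlen T1) v l <= r) :
 tl_le T2 h (K * (r / e) + K).
Proof.
  set (Y := Yset T1 B b).
  assert (Hr0 : 0 <= r) by (pose proof (walk_nonneg _ _ _ _ Hw); lra).
  destruct (t_conn G T1 v b) as [l0 Hl0].
  assert (Yb : Y b).
  { exists gone, []. split; [intros p q []| simpl; rewrite tact1; auto]. }
  pose proof Hl0 as Hl0'. apply walk_iff in Hl0'. destruct Hl0' as [Hl0E Hl0L].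
  destruct (prefix Y l0 v) as [l1 [Hp [Hl1a Hl1b]]]. { rewrite Hl0L; auto. }
  set (p := lst v l1) in *.
  destruct (reduce (tlen T1) v l1) as [L1 [RL1 [LL1 [PL1 _]]]].
  { intros x y H. apply Rlt_le, tlen_pos, Hl0E, Hl1a; auto. }
  assert (WL1 : walk (tV T1) (tE T1) v L1 p).
  { apply walk_iff. split; [intros x y H; apply Hl0E, Hl1a, PL1; auto | auto]. }
  assert (NL1 : forall x y, In (x,y) (prs v L1) -> ~ Y x).
  { intros x y H. apply (Hl1b x y), PL1; auto. }
  destruct (Y_Zl T1 B b p Hp) as [t0 [a0 [Ha0 Ep]]].
  assert (HM : exists Mr, Bwalk T1 B p Mr (tact T1 h p)).
  { destruct Hp as [t [lA HA]].
    destruct (gen (gmul (ginv t) (gmul h t))) as [w [Hw1 Hw2]].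
    destruct (Bwalk_word T1 S b B HS w Hw1 t) as [lW HW].
    rewrite Hw2, gmulA, gmulV, gmul1l in HW.
    pose proof (Bwalk_map T1 B h _ _ _ (Bwalk_rp T1 B _ _ _ HA)) as HC.
    rewrite <- tactM in HC.
    exists (lA ++ lW ++ map (tact T1 h) (rp p lA)).
    eapply Bwalk_app; [exact HA|]. eapply Bwalk_app; [exact HW| exact HC]. }
  destruct HM as [Mr [HMr1 HMr2]].
  destruct (reduce (tlen T1) p Mr) as [M [RM [LM [PM _]]]].
  { intros x y H. apply Rlt_le, tlen_pos. apply (Bstep_E T1 B hB). auto. }
  assert (BM : forall x y, In (x,y) (prs p M) -> Bstep T1 B x y) by auto.
  assert (WM : walk (tV T1) (tE T1) p M (tact T1 h p)).
  { apply walk_iff; split; [intros; apply (Bstep_E T1 B hB); auto| congruence]. }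
  assert (HMlen : wlength (tV T1) (tlen T1) p M <= r).
  { destruct M as [|m M'] eqn:EM.
    - simpl; lra.
    - rewrite <- EM in *.
      assert (YM : forall x y, In (x,y) (prs p M) -> Y x /\ Y y).
      { apply Y_walk; auto. }
      set (L3 := map (tact T1 h) (rp v L1)).
      assert (WL3 : walk (tV T1) (tE T1) (tact T1 h p) L3 (tact T1 h v)).
      { apply walk_map. apply walk_rp in WL1. auto. }
      assert (RL3 : reduced (tV T1) (tact T1 h p) L3).
      { unfold L3. apply red_map. apply tact_inj. unfold p. rewrite <- LL1.
        apply red_rp; auto. }
      assert (RW : reduced (tV T1) v (L1 ++ M ++ L3)).
      { apply red_app; auto.
        - rewrite LL1. fold p. apply red_app; auto.
          + rewrite LM, HMr2. auto.
          + intros HMn x l2' E3.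
            assert (HL1n : L1 <> []).
            { intro E; unfold L3 in E3; rewrite E in E3. discriminate. }
            destruct (rp_head v L1 HL1n) as [rr Err].
            unfold L3 in E3. rewrite Err in E3. simpl in E3. inversion E3; subst x.
            intro Ex.
            assert (Yx : Y (penult p M)).
            { apply (proj1 (YM _ _ (penult_in p M HMn))). }
            rewrite Ex in Yx. apply Y_act_inv in Yx.
            apply (NL1 (penult v L1) (lst v L1)); auto. apply penult_in; auto.
        - intros HL1n x l2' E. rewrite EM in E. simpl in E. inversion E; subst x.
          intro Ex. assert (Ym : Y m).
          { refine (proj2 (YM p m _)). rewrite EM; simpl; auto. }
          rewrite <- Ex in Ym.
          apply (NL1 (penult v L1) (lst v L1)); auto. apply penult_in; auto. }
      assert (WW : walk (tV T1) (tE T1) v (L1 ++ M ++ L3) (tact T1 h v)).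
      { eapply walk_app; [exact WL1|]. eapply walk_app; [exact WM| exact WL3]. }
      pose proof Hw as Hw'. apply walk_iff in Hw'. destruct Hw' as [HwE HwL].
      destruct (reduce (tlen T1) v l) as [lr [Rlr [Llr [Plr Wlr]]]].
      { intros x y H. apply Rlt_le, tlen_pos, HwE; auto. }
      assert (Wlr' : walk (tV T1) (tE T1) v lr (tact T1 h v)).
      { apply walk_iff; split; [intros; apply HwE, Plr; auto| congruence]. }
      pose proof (t_uniq G T1 _ _ _ _ WW RW Wlr' Rlr) as Eq.
      rewrite <- Eq in Wlr. rewrite !wlength_app in Wlr.
      pose proof (walk_nonneg _ _ _ _ WL1).
      pose proof (walk_nonneg _ _ _ _ WL3).
      apply walk_iff in WL1. destruct WL1 as [_ E1]. rewrite E1 in Wlr.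
      apply walk_iff in WM. destruct WM as [_ E2]. rewrite E2 in Wlr.
      lra. }
  assert (Hcount : INR (length M) * e <= r).
  { pose proof (Bwalk_count T1 B hB e he p M BM). lra. }
  destruct (chain T1 T2 b B c K HK M p t0 a0 Ha0 Ep BM) as [t1 [a1 [H1 [H2 H3]]]].
  exists (tact T2 t0 c).
  assert (Hx : Dle T2 (tact T2 t1 c) (tact T2 (gmul h t0) c) K).
  { apply (xfer T1 T2 (Zl T1 b B) c K HK t1 a1 (gmul h t0) a0); auto.
    rewrite <- H2, LM, HMr2, tactM, Ep; auto. }
  rewrite tactM in Hx.
  pose proof (Dle_trans _ _ _ _ _ _ H3 Hx) as Hf.
  apply (Dle_mono _ _ _ _ _ Hf).
  assert (INR (length M) <= r / e).
  { apply Rmult_le_reg_r with e; auto. unfold Rdiv. rewrite Rmult_assoc, Rinv_l; lra. }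
  apply Rplus_le_compat_r. apply Rmult_le_compat_l; auto. Qed.

Lemma tl_mono {G} (T : gtree G) h a b : tl_le T h a -> a <= b -> tl_le T h b.
Proof. intros [v [l [H1 H2]]] H. exists v, l; split; auto; lra. Qed.
Lemma tl_nonneg {G} (T : gtree G) h a : tl_le T h a -> 0 <= a.
Proof. intros [v [l [H1 H2]]]. pose proof (walk_nonneg _ _ _ _ H1); lra. Qed.

Lemma core {G} (T1 T2 : gtree G) (S : list G) (gen : generates S)
 (ell : forall K, is_subgroup G K -> elliptic T1 K -> elliptic T2 K) (b : tV T1) :
 exists A, 0 <= A /\ forall h r, tl_le T1 h r -> tl_le T2 h (A * r + A).
Proof.
  assert (Hc : exists c : tV T2, True).
  { assert (Hs : is_subgroup G (fun x => x = gone)).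
    { split; [auto| split].
      - intros x y -> ->. apply gmul1l.
      - intros x ->. apply ginv1. }
    assert (He : elliptic T2 (fun x => x = gone)).
    { apply ell; auto. left. exists b. intros k ->. apply tact1. }
    destruct He as [[w _]|[w [_ _]]]; exists w; auto. }
  destruct Hc as [c _].
  destruct (mkB T1 S b) as [B [hB HS]].
  destruct (fin_min (fun pr => tlen T1 (fst pr) (snd pr)) B) as [e [he0 he]].
  { intros [a a'] H. apply tlen_pos, hB; auto. }
  destruct (fin_max (fun pr K => forall u, tact T1 u (fst pr) = snd pr ->
                       Dle T2 c (tact T2 u c) K)
             ltac:(intros x a0 b0 H Hab u Hu; apply Dle_mono with a0; auto)
             (list_prod (Zl T1 b B) (Zl T1 b B))) as [K [HK0 HK]].
  { intros [z1 z2] _. apply stab_bound; auto. }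
  exists (K / e + K). split.
  { assert (0 <= K / e) by (unfold Rdiv; apply Rmult_le_pos; [auto| apply Rlt_le, Rinv_0_lt_compat; auto]).
    lra. }
  intros h r Ht. pose proof (tl_nonneg _ _ _ Ht) as Hr0.
  destruct Ht as [v [l [Hw Hr]]].
  eapply tl_mono.
  - apply (main_core T1 T2 S gen b B hB HS e he0 (fun a a' H => he (a,a') H) c K HK0
             ltac:(intros z1 z2 H1 H2 u Hu; apply (HK (z1,z2)); auto; apply in_prod; auto)
             h v l r Hw Hr).
  - assert (0 <= K / e) by (unfold Rdiv; apply Rmult_le_pos; [auto| apply Rlt_le, Rinv_0_lt_compat; auto]).
    replace (K * (r / e)) with (K / e * r) by (unfold Rdiv; ring).
    assert (0 <= K * r) by (apply Rmult_le_pos; auto).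
    nra. Qed.

Definition addc (N : Z) (Q : list Z) : list Z :=
  match Q with [] => [N] | a :: q => (N + a)%Z :: q end.

Lemma peval_scale N P x : peval (map (Z.mul N) P) x = IZR N * peval P x.
Proof. induction P; simpl; [ring|]. rewrite IHP, mult_IZR; ring. Qed.
Lemma peval_addc N Q x : peval (addc N Q) x = IZR N + peval Q x.
Proof. destruct Q; simpl; [ring|]. rewrite plus_IZR; ring. Qed.

Lemma dir (G : group) (Hs : list (G -> Prop)) (hhyp : hyperbolic G)
  (T1 T2 : gtree G)
  (hT1 : elliptic_iff_peripheral T1 Hs)
  (hT2 : elliptic_iff_peripheral T2 Hs)
  (alpha : G -> G) (g : G) :
  poly_growth T1 alpha g -> poly_growth T2 alpha g.
Proof.
  intros [P HP].
  destruct hhyp as [S [gen _]].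
  assert (ell : forall K, is_subgroup G K -> elliptic T1 K -> elliptic T2 K).
  { intros K HK H. apply (hT2 K HK). apply (hT1 K HK). auto. }
  destruct (HP 0%nat) as [b _].
  destruct (core T1 T2 S gen ell b) as [A [HA0 HA]].
  set (N := up A). destruct (archimed A) as [HN _].
  exists (addc N (map (Z.mul N) P)). intro n.
  specialize (HP n). pose proof (tl_nonneg _ _ _ HP).
  eapply tl_mono; [apply HA; eauto|].
  rewrite peval_addc, peval_scale. fold N in HN.
  set (r := peval P (INR n)) in *. nra. Qed.

Theorem lemma3p1 (G : group) (Hs : list (G -> Prop))
  (hhyp : hyperbolic G) (htf : torsion_free G)
  (hHs : forall H, In H Hs -> is_subgroup G H)
  (T1 T2 : gtree G)
  (hT1 : elliptic_iff_peripheral T1 Hs)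
  (hT2 : elliptic_iff_peripheral T2 Hs)
  (alpha : G -> G) (halpha : is_automorphism G alpha)
  (hpres : preserves_periph alpha Hs)
  (g : G) :
  poly_growth T1 alpha g <-> poly_growth T2 alpha g.
Proof.
  split; apply dir with Hs; auto.
Qed.
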